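(* Let $(G,c,(k_i)_{i=1}^t)$ be an instance of \textsc{$\mathbb{T}$-Fair Feedback Vertex Set} and let $n_i=c_i(V(G))$. Let $G'$ be the graph with $V(G')=V(G)\cup\{v_0\}$ and $E(G')=E(G)\cup E_0$, where $v_0\notin V(G)$ and $E_0=\{vv_0 : v\in V(G)\}$. Let $c':V(G')\to 2^{[t]}\setminus\{\emptyset\}$ be given by $c'(v_0)=[t]$ and $c'(v)=c(v)$ for $v\in V(G)$. Then $G$ has a $(k_i)_{i=1}^t$-fair feedback vertex set if and only if there exists a pair $(X,X_0)$ such that (a) $X\subseteq V(G)\cup\{v_0\}$ with $v_0\in X$ and $X_0\subseteq E_0$; (b) the subgraph of $G'$ with vertex set $X$ and edge set $E_{G'}[X\setminus\{v_0\}]\cup X_0$ is connected; (c) $|E_{G'}[X\setminus\{v_0\}]\cup X_0|=|X|-1$; and (d) $c'_i(X)=n_i-k_i+1$ for every $i\in[t]$.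
   Context: $[t]=\{1,\dots,t\}$. A $t$-coloured graph is $(G,c)$ with $c:V(G)\to 2^{[t]}\setminus\{\emptyset\}$; for $S$ a vertex set, $c_i(S)=|\{v\in S: i\in c(v)\}|$ (similarly $c'_i$ for $c'$). A set $F\subseteq V(G)$ is a $(k_i)_{i=1}^t$-fair feedback vertex set if $G-F$ is acyclic and $c_i(F)=k_i$ for every $i$. For $Y\subseteq V(G')$, $E_{G'}[Y]$ denotes the set of edges of $G'$ with both endpoints in $Y$. *)

(* Defs.v *)
From mathcomp Require Import all_boot.
Set Implicit Arguments. Unset Strict Implicit. Unset Printing Implicit Defensive.

(* A simple graph on a finType T is a symmetric irreflexive relation e.
   Colours [t] are represented by 'I_t. *)

Section Defs.
Variable T : finType.

Definition ccount (t : nat) (c : T -> {set 'I_t}) (i : 'I_t) (S : {set T}) : nat :=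
  #|[set v in S | i \in c v]|.

Definition cycle_avoiding (e : rel T) (F : {set T}) (s : seq T) : Prop :=
  [/\ 3 <= size s, uniq s, cycle e s & all (fun v => v \notin F) s].

Definition acyclic_minus (e : rel T) (F : {set T}) : Prop :=
  ~ exists s : seq T, cycle_avoiding e F s.

Definition fair_fvs (t : nat) (e : rel T) (c : T -> {set 'I_t})
    (k : 'I_t -> nat) (F : {set T}) : Prop :=
  acyclic_minus e F /\ forall i : 'I_t, ccount c i F = k i.

Definition induced_edges (e : rel T) (Y : {set T}) : {set {set T}} :=
  [set [set x; y] | x in Y, y in Y & e x y].

Definition sub_connected (X : {set T}) (Ed : {set {set T}}) : Prop :=
  forall x y, x \in X -> y \in X ->
    connect (fun u v => [set u; v] \in Ed) x y.
End Defs.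

(* G' : vertex set option T, with v0 = None adjacent to every old vertex *)
Definition cone_rel (T : finType) (e : rel T) : rel (option T) :=
  fun x y => match x, y with
             | Some u, Some v => e u v
             | Some _, None => true
             | None, Some _ => true
             | None, None => false
             end.

Definition E0 (T : finType) : {set {set option T}} :=
  [set [set Some v; None] | v : T].

Definition cone_col (T : finType) (t : nat) (c : T -> {set 'I_t}) :
    option T -> {set 'I_t} :=
  fun x => match x with Some v => c v | None => [set: 'I_t] end.

(* Main.v *)
Require Import Defs.
From mathcomp Require Import all_boot.
From Stdlib Require Import Classical.
From mathcomp Require Import zify.
Set Implicit Arguments. Unset Strict Implicit. Unset Printing Implicit Defensive.

Section Gen.
Variable U : finType.
Implicit Types E : {set {set U}}.

Definition adj E : rel U := fun u v => [set u; v] \in E.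
Definition has_cycle E := exists s : seq U, [/\ 3 <= size s, uniq s & cycle (adj E) s].
Definition wfE E := forall f, f \in E -> exists x y, x != y /\ f = [set x; y].

Lemma adj_sym E : symmetric (adj E).
Proof. by move=> u v; rewrite /adj setUC. Qed.

Lemma csym E : connect_sym (adj E).
Proof. exact: sym_connect_sym (adj_sym E). Qed.

Lemma set2_eq (u w x y : U) : [set u; w] = [set x; y] ->
  (u = x /\ w = y) \/ (u = y /\ w = x).
Proof.
move=> H.
have hu : u \in [set x; y] by rewrite -H set21.
have hw : w \in [set x; y] by rewrite -H set22.
have hx : x \in [set u; w] by rewrite H set21.
have hy : y \in [set u; w] by rewrite H set22.
case/set2P: hu => ?; case/set2P: hw => ?; case/set2P: hx => ?; case/set2P: hy => ?;
  subst; auto.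
Qed.

Lemma adjD1 E f u v : adj E u v -> adj (E :\ f) u v \/ [set u; v] = f.
Proof.
rewrite /adj in_setD1 => ->; case: eqP => [->|]; by [right|left].
Qed.

Lemma adj_sub E E' : E' \subset E -> subrel (adj E') (adj E).
Proof. by move=> /subsetP sE u v; apply: sE. Qed.

Lemma connect_split E x y u v : connect (adj E) u v ->
  connect (adj (E :\ [set x; y])) u v || ((connect (adj (E :\ [set x; y])) u x || connect (adj (E :\ [set x; y])) u y) &&
                           (connect (adj (E :\ [set x; y])) x v || connect (adj (E :\ [set x; y])) y v)).
Proof.
set E1 := E :\ [set x; y].
move=> /connectP [p pth ->].
pose P w := connect (adj E1) u w || ((connect (adj E1) u x || connect (adj E1) u y) &&
                           (connect (adj E1) x w || connect (adj E1) y w)).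
have P0 : P u by rewrite /P connect0.
suff key : forall q w, path (adj E) w q -> P w -> P (last w q) by exact: key.
clear pth; elim=> [|z q IH] w //= /andP [hwz hp] Pw; apply: IH hp _; move: Pw; rewrite /P => Pw.
case: (adjD1 [set x; y] hwz) => [h1|/set2_eq].
  have c := connect1 h1.
  case/orP: Pw => [c1|/andP [-> /orP [c1|c1]]].
  - by rewrite (connect_trans c1 c).
  - by rewrite (connect_trans c1 c) orbT.
  - by rewrite (connect_trans c1 c) !orbT.
have Hz : forall t, t = x \/ t = y -> (connect (adj E1) x t || connect (adj E1) y t).
  by move=> t [->|->]; rewrite connect0 ?orbT.
move=> Hwz; have Hw : w = x \/ w = y by case: Hwz => [[->]|[->]]; auto.
have Hz' : z = x \/ z = y by case: Hwz => [[_ ->]|[_ ->]]; auto.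
apply/orP; right; apply/andP; split; last exact: Hz.
case/orP: Pw => [c1|/andP [//]].
by case: Hw c1 => <- ->; rewrite ?orbT.
Qed.

Lemma notin2 (a b z u : U) : z \notin [set a; b] -> [set u; z] != [set a; b].
Proof. by move=> hz; apply/eqP => H; move: hz; rewrite -H set22. Qed.
Lemma notin2l (a b z u : U) : u \notin [set a; b] -> [set u; z] != [set a; b].
Proof. by move=> hz; apply/eqP => H; move: hz; rewrite -H set21. Qed.

Lemma path_avoid E (a b : U) q u : path (adj E) u (rcons q a) -> a \notin q -> b \notin q ->
  (q = [::] -> u \notin [set a; b]) -> path (adj (E :\ [set a; b])) u (rcons q a).
Proof.
elim: q u => [|z q IH] u /=.
  by rewrite !andbT => h _ _ hu; rewrite /adj in_setD1 notin2l ?hu.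
rewrite !inE !negb_or => /andP [huz hp] /andP [az aq] /andP [bz bq] _.
have zn : z \notin [set a; b] by rewrite !inE negb_or eq_sym az eq_sym bz.
rewrite {1}/adj in_setD1 notin2 //=; apply/andP; split; first exact: huz.
by apply: IH => // ->.
Qed.

Lemma cycle_conn E (a b : U) q : uniq [:: a, b & q] -> cycle (adj E) [:: a, b & q] ->
  q != [::] -> [set a; b] \in E /\ connect (adj (E :\ [set a; b])) b a.
Proof.
rewrite /= !inE !negb_or => /and3P [/andP [ab aq] bq _] /andP [hab hp] qn.
split => //; apply/connectP; exists (rcons q a); last by rewrite last_rcons.
by apply: path_avoid => // qe; move: qn; rewrite qe.
Qed.

Lemma connect_cycle E (x y : U) : x != y -> [set x; y] \in E ->
  connect (adj (E :\ [set x; y])) x y -> has_cycle E.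
Proof.
move=> xy hE /connectP [p pth ey].
case: (shortenP pth) ey => p' pth' up' _ ey.
have pthE : path (adj E) x p' by apply: sub_path pth' => u v; apply: adj_sub; apply: subD1set.
exists (x :: p'); split => //=; last first.
  by rewrite rcons_path pthE -ey /adj setUC.
case: p' pth' up' pthE ey => [|z [|w r]] //=.
  by move=> _ _ _ ey; move: xy; rewrite ey eqxx.
by rewrite andbT => + _ _ ey; rewrite ey /adj in_setD1 eqxx.
Qed.

Lemma adj0 : forall u v, adj set0 u v = false.
Proof. by move=> u v; rewrite /adj inE. Qed.

Lemma conn0 (u v : U) : connect (adj set0) u v -> u = v.
Proof. by move/connectP=> [[|z p] /=]; [move=> _ ->| rewrite adj0]. Qed.

Lemma nocycle0 : ~ has_cycle set0.
Proof. by move=> [[|a [|b s]] [//= _ _]]; rewrite /= adj0. Qed.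

Lemma forest_set0 : exists R : {set U},
  [/\ (forall v, exists2 r, r \in R & connect (adj set0) v r),
      (forall r1 r2, r1 \in R -> r2 \in R -> connect (adj set0) r1 r2 -> r1 = r2),
      (has_cycle set0 -> #|U| < #|(set0 : {set {set U}})| + #|R|) &
      (~ has_cycle set0 -> #|U| = #|(set0 : {set {set U}})| + #|R|)].
Proof.
exists setT; split.
- by move=> v; exists v; [rewrite inE | exact: connect0].
- by move=> r1 r2 _ _; exact: conn0.
- by move/nocycle0.
- by move=> _; rewrite cards0 cardsT.
Qed.

Lemma forestG n : forall E, #|E| <= n -> wfE E -> exists R : {set U},
  [/\ (forall v, exists2 r, r \in R & connect (adj E) v r),
      (forall r1 r2, r1 \in R -> r2 \in R -> connect (adj E) r1 r2 -> r1 = r2),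
      (has_cycle E -> #|U| < #|E| + #|R|) &
      (~ has_cycle E -> #|U| = #|E| + #|R|)].
Proof.
elim: n => [|n IH] E hn wf.
  by move: hn; rewrite leqn0 => /eqP/cards0_eq ->; exact: forest_set0.
case: (set_0Vmem E) => [->|[f fE]]; first exact: forest_set0.
have sub1 : forall g u v, connect (adj (E :\ g)) u v -> connect (adj E) u v.
  move=> g; apply: connect_sub => u v h; apply: connect1; exact: (adj_sub (subD1set E g) h).
have wf1 : forall g, wfE (E :\ g).
  by move=> g h; rewrite in_setD1 => /andP [_]; exact: wf.
case: (classic (has_cycle E)) => [HC|NC].
  case: HC => s [s3 us cs]; case: s s3 us cs => [|a [|b q]] // s3 us cs.
  have qn : q != [::] by case: q s3 {us cs}.
  have [abE cba] := cycle_conn us cs qn.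
  set E1 := E :\ [set a; b].
  have cardE : #|E| = #|E1|.+1 by rewrite (cardsD1 [set a; b] E) abE.
  have [|R [Hrep Hpw Hc Hn]] := IH E1 _ (wf1 _); first by move: hn; rewrite cardE.
  have back : forall u v, connect (adj E) u v -> connect (adj E1) u v.
    move=> u v /(connect_split a b) /orP [//| /andP [h1 h2]].
    have cab : connect (adj E1) a b by rewrite csym.
    have ca : connect (adj E1) u a by case/orP: h1 => // h; exact: connect_trans h cba.
    have cb : connect (adj E1) a v by case/orP: h2 => // h; exact: connect_trans cab h.
    exact: connect_trans ca cb.
  exists R; split.
  - by move=> v; case: (Hrep v) => r rR c; exists r => //; exact: sub1 c.
  - by move=> r1 r2 h1 h2 c; apply: Hpw => //; exact: back.
  - move=> _; have : #|U| <= #|E1| + #|R|.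
      by case: (classic (has_cycle E1)) => [/Hc/ltnW|/Hn ->].
    by rewrite cardE addSn ltnS.
  - by case; exists [:: a, b & q].
case: (wf f fE) => x [y [xy fxy]]; subst f.
set E1 := E :\ [set x; y].
have cardE : #|E| = #|E1|.+1 by rewrite (cardsD1 [set x; y] E) fE.
have [|R1 [Hrep Hpw Hc Hn]] := IH E1 _ (wf1 _); first by move: hn; rewrite cardE.
case: (boolP (connect (adj E1) x y)) => cxy.
  by exfalso; apply: NC; exact: connect_cycle xy fE cxy.
case: (Hrep x) => rx rxR cx; case: (Hrep y) => ry ryR cy.
have rxy : rx != ry.
  apply/eqP => e; move/negP: cxy; apply; apply: connect_trans cx _; by rewrite e csym.
exists (R1 :\ ry); split.
- move=> v; case: (Hrep v) => r rR c; case: (eqVneq r ry) => [er|ner].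
    exists rx; first by rewrite in_setD1 rxy rxR.
    apply: connect_trans (sub1 _ _ _ c) _; rewrite er.
    have ryy : connect (adj E) ry y by apply: (sub1 [set x; y]); rewrite csym.
    apply: connect_trans ryy _; apply: connect_trans (sub1 _ _ _ cx).
    by apply: connect1; rewrite /adj setUC.
  by exists r; [rewrite in_setD1 ner rR | exact: sub1 c].
- move=> r1 r2; rewrite !in_setD1 => /andP [n1 h1] /andP [n2 h2] c.
  case/orP: (connect_split x y c) => [c'|/andP [h3 h4]]; first exact: Hpw.
  have e1 : r1 = rx.
    case/orP: h3 => h; first by apply: Hpw => //; exact: connect_trans h cx.
    by move: n1; rewrite (Hpw r1 ry) ?eqxx //; exact: connect_trans h cy.
  have e2 : r2 = rx.
    rewrite [connect _ x r2]csym [connect _ y r2]csym in h4.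
    case/orP: h4 => h; first by apply: Hpw => //; exact: connect_trans h cx.
    by move: n2; rewrite (Hpw r2 ry) ?eqxx //; exact: connect_trans h cy.
  by rewrite e1 e2.
- by move/NC.
- move=> _.
  have NC1 : ~ has_cycle E1.
    case=> s [s3 us cs]; apply: NC; exists s; split => //.
    exact: sub_cycle (adj_sub (subD1set E _)) _ cs.
  rewrite (Hn NC1) cardE (cardsD1 ry R1) ryR.
  by rewrite /= add1n addSn addnS.
Qed.
End Gen.

Lemma mem_induced (T : finType) (e : rel T) (Y : {set T}) f :
  f \in induced_edges e Y <-> exists x y, [/\ x \in Y, y \in Y, e x y & f = [set x; y]].
Proof.
split.
  by move/imset2P => [x y xY]; rewrite inE => /andP [yY exy] ->; exists x, y.
move=> [x [y [xY yY exy ->]]]; apply: imset2_f => //; by rewrite inE yY exy.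
Qed.

Lemma ccount_cone (T : finType) t (c : T -> {set 'I_t}) i (X : {set option T}) :
  None \in X -> ccount (cone_col c) i X = (ccount c i [set v | Some v \in X]).+1.
Proof.
move=> NX; rewrite /ccount.
set A := [set v in [set v | Some v \in X] | i \in c v].
have -> : [set v in X | i \in cone_col c v] = None |: (Some @: A).
  apply/setP => z; case: z => [v|]; rewrite !inE /=.
    by rewrite (mem_imset _ _ Some_inj) !inE.
  by rewrite NX.
rewrite cardsU1 card_imset; last exact: Some_inj.
suff -> : None \notin Some @: A by [].
by apply/imsetP => [[v _]].
Qed.

Lemma ccount_split (T : finType) t (c : T -> {set 'I_t}) i (A : {set T}) :
  ccount c i [set: T] = ccount c i A + ccount c i (~: A).
Proof.
rewrite /ccount -(cardsID A [set v in [set: T] | i \in c v]).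
by congr (_ + _); apply: eq_card => v; rewrite !inE andbC.
Qed.

Theorem lemma4 (T : finType) (t : nat) (e : rel T) (c : T -> {set 'I_t})
    (k : 'I_t -> nat)
    (e_sym : symmetric e) (e_irr : irreflexive e)
    (c_ne : forall v, c v != set0) :
  (exists F : {set T}, fair_fvs e c k F) <->
  (exists (X : {set option T}) (X0 : {set {set option T}}),
     [/\ None \in X /\ X0 \subset E0 T,
         (* X0 consists of edges of G'[X], so (X, E[X\{v0}] u X0) is a subgraph *)
         (forall f, f \in X0 -> f \subset X) /\
           sub_connected X (induced_edges (cone_rel e) (X :\ None) :|: X0),
         #|induced_edges (cone_rel e) (X :\ None) :|: X0| = #|X| - 1
       & forall i : 'I_t,
           ccount (cone_col c) i X + k i = ccount c i [set: T] + 1]).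
Proof.
split.
  move=> [F [acyc hk]].
  set EF := induced_edges e (~: F).
  have adjEF : forall u v, adj EF u v -> [/\ u \notin F, v \notin F & e u v].
    move=> u v /mem_induced [x [y [xF yF exy /set2_eq]]].
    rewrite !inE in xF yF.
    by case=> [[-> ->]|[-> ->]]; split => //; rewrite e_sym.
  have wfEF : wfE EF.
    move=> g /mem_induced [x [y [_ _ exy ->]]].
    exists x, y; split => //; apply/eqP => exy'; subst y.
    by rewrite e_irr in exy.
  have [R [Hrep Hpw Hc Hn]] := forestG (leqnn _) wfEF.
  have nocyc : ~ has_cycle EF.
    move=> [s [s3 us cs]]; apply: acyc; exists s; split => //.
      by apply: sub_cycle cs => u v /adjEF [].
    apply/allP => v vs; have := next_cycle cs vs.
    by case/adjEF.
  have hT := Hn nocyc.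
  have isol : forall f w, f \in F -> connect (adj EF) f w -> w = f.
    move=> f w fF /connectP [[|z p] /=]; first by move=> _ ->.
    by case/andP => /adjEF []; rewrite fF.
  have FR : F \subset R.
    apply/subsetP => f fF; case: (Hrep f) => r rR /(isol _ _ fF) <-.
    exact: rR.
  set X := None |: (Some @: ~: F).
  set X0 := [set [set Some r; None] | r in R :\: F].
  have NX : None \in X by rewrite setU11.
  have XN : X :\ None = Some @: ~: F.
    apply/setP => z; case: z => [v|]; rewrite !inE //=.
    by symmetry; apply/negbTE/imsetP; case.
  have SX : forall v, (Some v \in X) = (v \notin F).
    by move=> v; rewrite !inE /= (mem_imset _ _ Some_inj) inE.
  set Ed := induced_edges (cone_rel e) (X :\ None) :|: X0.
  have adjS : forall u v, adj EF u v -> adj Ed (Some u) (Some v).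
    move=> u v /adjEF [uF vF euv]; rewrite /adj inE; apply/orP; left.
    apply/mem_induced; exists (Some u), (Some v); split => //; rewrite in_setD1 /= SX //.
  have toNone : forall x, x \in X -> connect (adj Ed) x None.
    case=> [v|_]; last exact: connect0.
    rewrite SX => vF; case: (Hrep v) => r rR cv.
    have rF : r \notin F.
      apply/negP => rF; move: vF; rewrite csym in cv.
      by rewrite (isol _ _ rF cv) rF.
    apply: (@connect_trans _ _ (Some r)).
      case/connectP: cv => p pth ->; apply/connectP; exists (map Some p).
        by rewrite path_map; apply: sub_path pth.
      by rewrite last_map.
    apply: connect1; rewrite /adj inE; apply/orP; right.
    by apply: imset_f; rewrite inE rF.
  exists X, X0; split.
  - split => //; apply/subsetP => g /imsetP [r _ ->].
    by apply/imsetP; exists r.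
  - split.
      move=> g /imsetP [r]; rewrite inE => /andP [rF rR] ->.
      by apply/subsetP => z /set2P [->|->] //; rewrite SX.
    move=> x y xX yX; apply: connect_trans (toNone x xX) _.
    by rewrite csym; exact: toNone.
  - have A : induced_edges (cone_rel e) (X :\ None) = (fun s : {set T} => Some @: s) @: EF.
      rewrite XN; apply/setP => g; apply/idP/idP.
        move/mem_induced => [x [y [/imsetP [u uF ->] /imsetP [w wF ->] exy ->]]].
        have -> : [set Some u; Some w] = Some @: [set u; w] by rewrite imsetU1 imset_set1.
        by apply: imset_f; apply/mem_induced; exists u, w.
      move/imsetP => [s /mem_induced [u [w [uF wF euw ->]]] ->].
      rewrite imsetU1 imset_set1; apply/mem_induced; exists (Some u), (Some w).
      by split => //; apply: imset_f.
    have cA : #|induced_edges (cone_rel e) (X :\ None)| = #|EF|.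
      by rewrite A card_imset //; apply: imset_inj; exact: Some_inj.
    have cX0 : #|X0| = #|R :\: F|.
      rewrite card_imset // => a b /set2_eq [[/Some_inj] //|[]] //.
    have dis : induced_edges (cone_rel e) (X :\ None) :&: X0 = set0.
      apply/setP => g; rewrite !inE; apply/negP => /andP [/mem_induced [x [y [xX yX _ ->]]] /imsetP [r _ eq]].
      have : None \in [set x; y] by rewrite eq !inE eqxx orbT.
      rewrite !inE => /orP [/eqP xN|/eqP yN].
        by move: xX; rewrite -xN in_setD1 eqxx.
      by move: yX; rewrite -yN in_setD1 eqxx.
    rewrite cardsU dis cards0 subn0 cA cX0 cardsD (setIidPr FR).
    have NI : None \notin Some @: ~: F by apply/imsetP; case.
    have cXs : #|X| = (#|~: F|).+1.
      by rewrite /X cardsU1 NI card_imset //; exact: Some_inj.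
    rewrite cXs; have := cardsC F; have := subset_leq_card FR.
    have hT2 : #|T| = #|EF| + #|R| := hT.
    move: hT2; generalize #|EF| #|R| #|F| #|~: F| #|T|; lia.
  - move=> i; rewrite ccount_cone // (ccount_split c i F) hk.
    have -> : [set v | Some v \in X] = ~: F by apply/setP => v; rewrite inE SX inE.
    lia.
move=> [X [X0 [[NX X0E] [X0X conn] hcard hcol]]].
set Ed := induced_edges (cone_rel e) (X :\ None) :|: X0.
have wfEd : wfE Ed.
  move=> g; rewrite inE => /orP [/mem_induced [x [y [_ _ exy ->]]] | gX0].
    exists x, y; split => //; apply/eqP => exy'; subst y.
    by case: x exy => [v|] //=; rewrite e_irr.
  move/subsetP: X0E => /(_ g gX0) /imsetP [v _ ->].
  by exists (Some v), None.
have [R [Hrep Hpw Hc Hn]] := forestG (leqnn _) wfEd.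
have nocyc : ~ has_cycle Ed.
  move=> HC; have := Hc HC.
  have RX : #|R :&: X| <= 1.
    apply/card_le1_eqP => r1 r2; rewrite !inE => /andP [r1R r1X] /andP [r2R r2X].
    by apply: Hpw => //; exact: conn.
  have RXc : #|R :\: X| <= #|~: X|.
    by apply: subset_leq_card; apply/subsetP => z; rewrite !inE => /andP [].
  have := cardsID X R; have := cardsC X.
  have X1 : 0 < #|X| by apply/card_gt0P; exists None.
  rewrite hcard. move=> h1 h2 h3; rewrite -h1 in h3; have h4 : #|R| <= 1 + #|~: X| by rewrite -h2; apply: leq_add. move: h3 h4 X1; generalize #|R| #|X| #|~: X|. lia.
set F := [set v | Some v \notin X].
exists F; split.
  move=> [s [s3 us cs avoid]]; apply: nocyc.
  exists (map Some s); split; rewrite ?size_map ?(map_inj_uniq Some_inj) //.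
  rewrite cycle_map; apply: (sub_in_cycle (P := [pred v | v \notin F])) _ avoid cs.
  move=> u v; rewrite !inE !negbK => uX vX euv.
  rewrite /= /adj inE; apply/orP; left; apply/mem_induced.
  by exists (Some u), (Some v); split; rewrite ?in_setD1.
move=> i; have := hcol i.
rewrite ccount_cone // (ccount_split c i F).
have -> : ~: F = [set v | Some v \in X] by apply/setP => v; rewrite !inE negbK.
lia.
Qed.
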